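(* For each $k\ge 3$, let $\mathcal S(\eta,k)$ be the $k$-uniform hyperstar consisting of $\eta$ edges pairwise meeting only in a common center vertex $1$. Let $y^{(\eta)}$ be the principal eigenvector of $\mathcal S(\eta,k)$ and $x^{(\eta)}$ the principal eigenvector of its clique-shadow (the windmill graph of $\eta$ copies of $K_k$ sharing vertex $1$). Then $(y^{(\eta)}_1)^k=1/k$ for every $\eta$, and $(x^{(\eta)}_1)^2\to 1/2$ as $\eta\to\infty$. Consequently $\Delta_k\ge \tfrac12-\tfrac1k$, where $\Delta_k=\sup_H\max_v|y_v^k-x_v^2|$ over all connected $k$-uniform hypergraphs $H$ (with $y,x$ the principal eigenvectors of $H$ and $\partial^*H$).
   Context: For a connected $k$-uniform hypergraph $H=([n],E)$, writing $x^e=\prod_{v\in e}x_v$, its principal eigenvector is the unique strictly positive $y$ with $\|y\|_k=1$ and $\rho\, y_i^{k-1}=\sum_{e\ni i}y^{e\setminus\{i\}}$ for all $i$, where $\rho=\max_{\|z\|_k^k=1}k\sum_{e\in E}z^e$. The clique-shadow $\partial^*H$ is the multigraph on $[n]$ in which $\{u,v\}$ has multiplicity $\mu(uv)=|\{e\in E:u,v\in e\}|$; its principal eigenvector is the positive Perron eigenvector of its adjacency matrix (entries $\mu(uv)$), normalized to unit $2$-norm. *)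

(* Defs.v *)
From HB Require Import structures.
From mathcomp Require Import all_boot all_order all_algebra.
From mathcomp Require Import all_classical all_reals all_analysis.
Set Implicit Arguments. Unset Strict Implicit. Unset Printing Implicit Defensive.
Import Order.TTheory GRing.Theory Num.Theory.
Local Open Scope ring_scope.

(* A hypergraph on vertex set 'I_n (= [n], 0-indexed) is its edge set E. *)
Definition uniform (n k : nat) (E : {set {set 'I_n}}) : Prop :=
  forall e, e \in E -> #|e| = k.

Definition hconnected (n : nat) (E : {set {set 'I_n}}) : Prop :=
  forall u v : 'I_n,
    connect [rel a b | [exists e in E, (a \in e) && (b \in e)]] u v.

Definition lagr (R : realType) (n : nat) (E : {set {set 'I_n}}) (z : 'I_n -> R) : R :=
  \sum_(e in E) \prod_(v in e) z v.

Definition is_hspec_radius (R : realType) (n k : nat) (E : {set {set 'I_n}}) (rho : R) : Prop :=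
  (exists z : 'I_n -> R, \sum_i `|z i| ^+ k = 1 /\ rho = k%:R * lagr E z) /\
  (forall z : 'I_n -> R, \sum_i `|z i| ^+ k = 1 -> k%:R * lagr E z <= rho).

Definition hprincipal (R : realType) (n k : nat) (E : {set {set 'I_n}}) (y : 'I_n -> R) : Prop :=
  (forall i, 0 < y i) /\ \sum_i y i ^+ k = 1 /\
  exists rho : R, is_hspec_radius k E rho /\
    forall i, rho * y i ^+ k.-1 = \sum_(e in E | i \in e) \prod_(v in e :\ i) y v.

(* multiplicity of {u,v} in the clique-shadow (no loops) *)
Definition mu (n : nat) (E : {set {set 'I_n}}) (u v : 'I_n) : nat :=
  if u == v then 0%N else #|[set e in E | (u \in e) && (v \in e)]|.

(* spectral radius of the adjacency matrix of the clique-shadow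
   = max of the quadratic form on the unit sphere *)
Definition is_shadow_radius (R : realType) (n : nat) (E : {set {set 'I_n}}) (lam : R) : Prop :=
  (exists z : 'I_n -> R, \sum_i z i ^+ 2 = 1 /\
      lam = \sum_u \sum_v (mu E u v)%:R * z u * z v) /\
  (forall z : 'I_n -> R, \sum_i z i ^+ 2 = 1 ->
      \sum_u \sum_v (mu E u v)%:R * z u * z v <= lam).

Definition shadow_principal (R : realType) (n : nat) (E : {set {set 'I_n}}) (x : 'I_n -> R) : Prop :=
  (forall i, 0 < x i) /\ \sum_i x i ^+ 2 = 1 /\
  exists lam : R, is_shadow_radius E lam /\
    forall i, \sum_j (mu E i j)%:R * x j = lam * x i.

(* hyperstar S(eta,k): vertex 0 (= vertex 1 of the paper) is the center;
   edge j is {0} u {1 + j(k-1), ..., (j+1)(k-1)}. *)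
Definition star_edge (k eta : nat) (j : nat) : {set 'I_(eta * (k - 1)).+1} :=
  [set v : 'I_(eta * (k - 1)).+1 |
     (val v == 0%N) || ((1 + j * (k - 1) <= val v)%N && (val v < 1 + j.+1 * (k - 1))%N)].

Definition hyperstar (k eta : nat) : {set {set 'I_(eta * (k - 1)).+1}} :=
  [set star_edge k eta (val j) | j : 'I_eta].

Definition Delta (R : realType) (k : nat) : \bar R :=
  ereal_sup [set d : \bar R | exists (n : nat) (E : {set {set 'I_n}})
      (y x : 'I_n -> R) (v : 'I_n),
      [/\ uniform k E, hconnected E, hprincipal k E y, shadow_principal E x &
          d = (`|y v ^+ k - x v ^+ 2|)%:E]].

(* Main.v *)
Require Import Defs.
Set Implicit Arguments. Unset Strict Implicit.
From HB Require Import structures.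
From mathcomp Require Import all_boot all_order all_algebra.
From mathcomp Require Import all_classical all_reals all_analysis.
From mathcomp Require Import ring lra zify.
Import Order.TTheory GRing.Theory Num.Theory numFieldNormedType.Exports.
Local Open Scope classical_set_scope.
Local Open Scope ring_scope.
Local Close Scope classical_set_scope.
Lemma amgm (R : realFieldType) (I : finType) (A : {pred I}) (w : I -> R) (k : nat) :
  #|A| = k -> (0 < k)%N -> (forall i, 0 <= w i) ->
  k%:R * \prod_(i in A) w i <= \sum_(i in A) w i ^+ k.
Proof.
move=> hA k0 w0.
have := leif_AGM (A := A) (E := fun i => w i ^+ k) (fun i _ => exprn_ge0 k (w0 i)).
move/leifP; rewrite hA => h.
have hk : (0 : R) < k%:R by rewrite ltr0n.
set S := \sum_(i in A) w i ^+ k in h *.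
have S0 : 0 <= S by apply: sumr_ge0 => i _; exact: exprn_ge0.
rewrite prodrXl in h.
have P0 : 0 <= \prod_(i in A) w i by apply: prodr_ge0 => i _.
have : \prod_(i in A) w i <= S / k%:R.
  rewrite -(ler_pXn2r (n:=k)) //; last by rewrite nnegrE divr_ge0 // ler0n.
  by case: ifP h => _ h; [rewrite (eqP h) | exact: ltW].
by rewrite ler_pdivlMr // mulrC.
Qed.
Lemma prod_split (R : comNzRingType) n (e : {set 'I_n}) i (y : 'I_n -> R) :
  i \in e -> y i * \prod_(v in e :\ i) y v = \prod_(v in e) y v.
Proof.
move=> ie; rewrite (bigD1 i ie) /=; congr (_ * _); apply: eq_bigl => v.
by rewrite in_setD1 andbC.
Qed.

Lemma exch (R : realType) (n k : nat) (E : {set {set 'I_n}}) (y g : 'I_n -> R) (rho : R) :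
  (0 < k)%N ->
  (forall i, rho * y i ^+ k.-1 = \sum_(e in E | i \in e) \prod_(v in e :\ i) y v) ->
  \sum_(e in E) \sum_(v in e) g v * \prod_(u in e) y u = \sum_v g v * (rho * y v ^+ k).
Proof.
move=> k0 heig.
under eq_bigr => e _ do rewrite big_mkcond.
rewrite exchange_big /=; apply: eq_bigr => v _.
rewrite -big_mkcondr /= -mulr_sumr; congr (_ * _).
rewrite -(prednK k0) exprS mulrCA heig mulr_sumr; apply: eq_bigr => e /andP[_ ve].
by rewrite prod_split.
Qed.

Lemma hyper_gen (R : realType) (n k : nat) (E : {set {set 'I_n}}) (y : 'I_n -> R) (rho : R) :
  (0 < k)%N -> uniform k E -> (forall i, 0 < y i) ->
  (forall i, rho * y i ^+ k.-1 = \sum_(e in E | i \in e) \prod_(v in e :\ i) y v) ->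
  (k%:R * lagr E y = rho * \sum_i y i ^+ k) /\
  (forall z, k%:R * lagr E z <= rho * \sum_i `|z i| ^+ k).
Proof.
move=> k0 hu y0 heig; split.
  have := @exch _ _ _ _ _ (fun _ => 1) _ k0 heig.
  move=> h.
  have -> : k%:R * lagr E y = \sum_(e in E) \sum_(v in e) 1 * \prod_(u in e) y u.
    rewrite /lagr mulr_sumr; apply: eq_bigr => e eE.
    by rewrite sumr_const hu // mulr_natl mul1r.
  by rewrite h mulr_sumr; apply: eq_bigr => v _; rewrite mul1r.
move=> z.
pose w v := `|z v| / y v.
have hz v : `|z v| = y v * w v by rewrite /w mulrC divfK // gt_eqF.
have w0 v : 0 <= w v by rewrite /w divr_ge0 // ltW.
have -> : rho * \sum_i `|z i| ^+ k = \sum_v w v ^+ k * (rho * y v ^+ k).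
  rewrite mulr_sumr; apply: eq_bigr => v _.
  by rewrite hz exprMn; ring.
rewrite -(@exch _ _ _ _ _ (fun v => w v ^+ k) _ k0 heig).
have h1 : lagr E z <= \sum_(e in E) \prod_(v in e) `|z v|.
  apply: le_trans (ler_norm _) _; apply: le_trans (ler_norm_sum _ _ _) _.
  by rewrite le_eqVlt; apply/orP; left; apply/eqP; apply: eq_bigr => e _; rewrite normr_prod.
apply: le_trans (ler_wpM2l (ler0n _ k) h1) _.
rewrite mulr_sumr; apply: ler_sum => e eE.
rewrite -mulr_suml.
have -> : \prod_(v in e) `|z v| = \prod_(v in e) y v * \prod_(v in e) w v.
  by rewrite -big_split; apply: eq_bigr => v _; rewrite hz.
rewrite mulrCA [X in _ <= X]mulrC.
apply: ler_wpM2l; first by apply: prodr_ge0 => v _; exact: ltW.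
exact: amgm (hu e eE) k0 w0.
Qed.
Lemma two_ab (R : realFieldType) (p a b : R) : 0 < p -> 2 * (a * b) <= p * a ^+ 2 + p^-1 * b ^+ 2.
Proof.
move=> p0.
have -> : p * a ^+ 2 + p^-1 * b ^+ 2 = 2 * (a * b) + p^-1 * (p * a - b) ^+ 2.
  by field; rewrite gt_eqF.
by rewrite lerDl; apply: mulr_ge0; [rewrite invr_ge0 ltW | exact: sqr_ge0].
Qed.

Lemma shadow_gen (R : realType) (n : nat) (M : 'I_n -> 'I_n -> R) (x : 'I_n -> R) (lam : R) :
  (forall u v, M u v = M v u) -> (forall u v, 0 <= M u v) -> (forall i, 0 < x i) ->
  (forall i, \sum_j M i j * x j = lam * x i) ->
  (\sum_u \sum_v M u v * x u * x v = lam * \sum_i x i ^+ 2) /\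
  (forall z, \sum_u \sum_v M u v * z u * z v <= lam * \sum_i z i ^+ 2).
Proof.
move=> Ms M0 x0 heig; split.
  rewrite mulr_sumr; apply: eq_bigr => u _.
  have -> : \sum_v M u v * x u * x v = x u * \sum_v M u v * x v.
    by rewrite mulr_sumr; apply: eq_bigr => v _; ring.
  by rewrite heig; ring.
move=> z.
have T1 : \sum_u \sum_v M u v * (x v / x u * z u ^+ 2) = lam * \sum_i z i ^+ 2.
  rewrite mulr_sumr; apply: eq_bigr => u _.
  have -> : \sum_v M u v * (x v / x u * z u ^+ 2) = (z u ^+ 2 / x u) * \sum_v M u v * x v.
    by rewrite mulr_sumr; apply: eq_bigr => v _; ring.
  by rewrite heig; field; rewrite gt_eqF.
have T2 : \sum_u \sum_v M u v * ((x v / x u)^-1 * z v ^+ 2) = lam * \sum_i z i ^+ 2.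
  rewrite -T1 exchange_big /=; apply: eq_bigr => u _; apply: eq_bigr => v _.
  by rewrite invf_div Ms.
have h2 : 2 * \sum_u \sum_v M u v * z u * z v <= lam * \sum_i z i ^+ 2 + lam * \sum_i z i ^+ 2.
  rewrite -{1}T1 -T2 -big_split mulr_sumr; apply: ler_sum => u _.
  rewrite -big_split mulr_sumr; apply: ler_sum => v _ /=.
  rewrite -mulrA mulrCA -mulrDr; apply: ler_wpM2l => //.
  by apply: two_ab; rewrite divr_gt0.
lra.
Qed.
Definition blk (k : nat) (v : nat) : nat := v.-1 %/ (k - 1).

Lemma mem_star k eta j (v : 'I_(eta * (k - 1)).+1) : (0 < k - 1)%N ->
  (v \in star_edge k eta j) = (val v == 0%N) || (blk k v == j).
Proof.
move=> m0; rewrite inE; case: eqP => //= v0.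
rewrite /blk eqn_leq leq_divRL // -[(_ %/ _ <= _)%N]ltnS ltn_divLR //.
have : val v = (val v).-1.+1 by rewrite prednK // lt0n; apply/eqP.
move: (val v).-1 => w ->.
rewrite andbC; congr (_ && _); rewrite add1n ltnS //.
Qed.

Lemma blk_lt k eta (v : 'I_(eta * (k - 1)).+1) : (0 < k - 1)%N -> val v != 0%N ->
  (blk k v < eta)%N.
Proof.
move=> m0 v0; rewrite /blk ltn_divLR //.
have := ltn_ord v; rewrite ltnS => h.
by rewrite -ltnS prednK // lt0n.
Qed.
Lemma card_blk k eta J : (0 < k - 1)%N -> (J < eta)%N ->
  #|[set v : 'I_(eta * (k - 1)).+1 | (val v != 0%N) && (blk k v == J)]| = (k - 1)%N.
Proof.
move=> m0 Jlt.
set m := (k - 1)%N in m0 *.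
have hb (t : 'I_m) : (1 + J * m + t < (eta * m).+1)%N.
  have h1 : (J.+1 * m <= eta * m)%N by rewrite leq_mul2r Jlt orbT.
  have := ltn_ord t; rewrite mulSn in h1; lia.
pose f (t : 'I_m) : 'I_(eta * m).+1 := inord (1 + J * m + t).
have fv t : val (f t) = (1 + J * m + t)%N by apply: (inordK (hb t)).
have finj : injective f.
  by move=> t1 t2 /(congr1 val); rewrite !fv => /eqP; rewrite eqn_add2l => /eqP /val_inj.
have -> : [set v : 'I_(eta * m).+1 | (val v != 0%N) && (blk k v == J)] = [set f t | t : 'I_m].
  apply/setP => v; rewrite inE; apply/andP/imsetP.
    case=> v0 /eqP bv.
    exists (Ordinal (ltn_pmod (val v).-1 m0)); first by [].
    apply: val_inj; rewrite fv /=.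
    rewrite -bv /blk -/m -addnA -divn_eq add1n prednK // lt0n //.
  case=> t _ ->; rewrite /blk -/m; have -> : nat_of_ord (f t) = (1 + J * m + t)%N by apply: fv.
  rewrite -addnA add1n /=.
  by split; [rewrite fv | rewrite divnMDl // divn_small // addn0].
by rewrite (card_imset _ finj) card_ord.
Qed.

Lemma star_card k eta j : (0 < k - 1)%N -> (j < eta)%N -> #|star_edge k eta j| = k.
Proof.
move=> m0 jlt.
have -> : star_edge k eta j =
   (ord0 : 'I_(eta * (k - 1)).+1) |: [set v : 'I_(eta * (k - 1)).+1 | (val v != 0%N) && (blk k v == j)].
  apply/setP => v; rewrite mem_star // in_setU1 inE.
  case: (v =P ord0) => [->|h] //=.
  have -> : (nat_of_ord v == 0%N) = false by apply/negP => /eqP v0; apply: h; exact: val_inj.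
  by [].
rewrite cardsU1 card_blk // inE /=.
lia.
Qed.
Lemma vert_of_blk k eta J : (0 < k - 1)%N -> (J < eta)%N ->
  exists v : 'I_(eta * (k - 1)).+1, val v != 0%N /\ blk k v = J.
Proof.
move=> m0 Jlt.
have hb : (1 + J * (k - 1) < (eta * (k - 1)).+1)%N.
  have h1 : (J.+1 * (k - 1) <= eta * (k - 1))%N by rewrite leq_mul2r Jlt orbT.
  rewrite mulSn in h1; lia.
exists (inord (1 + J * (k - 1))); rewrite /blk !inordK // add1n /= mulnK //; split => //. have := inordK hb. rewrite add1n. move=> ->. by []. 
Qed.

Lemma star_inj k eta : (0 < k - 1)%N -> injective (fun j : 'I_eta => star_edge k eta j).
Proof.
move=> m0 j1 j2 /= h; apply: val_inj.
have [v [v0 bv]] := vert_of_blk m0 (ltn_ord j1).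
have : v \in star_edge k eta j1 by rewrite mem_star // bv eqxx orbT.
by rewrite h mem_star // (negPf v0) bv /= => /eqP.
Qed.

Lemma sum_star (R : realType) k eta (F : {set 'I_(eta * (k - 1)).+1} -> R) : (0 < k - 1)%N ->
  \sum_(e in hyperstar k eta) F e = \sum_(j : 'I_eta) F (star_edge k eta j).
Proof.
move=> m0; rewrite /hyperstar big_imset //=.
by move=> j1 j2 _ _; apply: star_inj.
Qed.

Lemma uniform_star k eta : (0 < k - 1)%N -> uniform k (hyperstar k eta).
Proof.
rewrite /uniform /hyperstar => m0 e /imsetP [j _ ->]; exact: star_card m0 (ltn_ord j).
Qed.

Lemma star0 k eta e : e \in hyperstar k eta -> ord0 \in e.
Proof. rewrite /hyperstar => /imsetP [j _ ->]; by rewrite inE. Qed.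
Lemma card_eqj eta J : (J < eta)%N -> #|[set j : 'I_eta | J == val j]| = 1%N.
Proof.
move=> Jlt; have -> : [set j : 'I_eta | J == val j] = [set Ordinal Jlt].
  by apply/setP => j; rewrite !inE -(inj_eq val_inj) /= eq_sym.
by rewrite cards1.
Qed.

Lemma mu_star k eta (u v : 'I_(eta * (k - 1)).+1) : (0 < k - 1)%N ->
  mu (hyperstar k eta) u v =
  if u == v then 0%N else if (val u == 0%N) || (val v == 0%N) then 1%N
  else nat_of_bool (blk k u == blk k v).
Proof.
move=> m0; rewrite /mu; case: eqP => // uv.
have -> : [set e in hyperstar k eta | (u \in e) && (v \in e)] =
  (fun j : 'I_eta => star_edge k eta j) @:
     [set j : 'I_eta | (u \in star_edge k eta j) && (v \in star_edge k eta j)].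
  apply/setP => e; rewrite inE; apply/andP/imsetP.
    by case=> /imsetP [j _ ->] h; exists j; rewrite // inE.
  by case=> j; rewrite inE => h ->; split => //; apply/imsetP; exists j.
rewrite card_imset; last exact: star_inj.
under eq_finset do rewrite !mem_star //.
case: (val u =P 0%N) => u0 /=.
  have v0 : val v != 0%N by apply/eqP => v0; apply: uv; apply: val_inj; rewrite u0 v0.
  under eq_finset do rewrite (negPf v0) /=.
  exact: card_eqj (blk_lt m0 v0).
have u0' : val u != 0%N by apply/eqP.
case: (val v =P 0%N) => v0 /=.
  under eq_finset do rewrite andbT.
  exact: card_eqj (blk_lt m0 u0').
case: eqP => buv.
  under eq_finset do rewrite buv andbb.
  exact: card_eqj (blk_lt m0 (introN eqP v0)).
apply/eqP; rewrite cards_eq0; apply/eqP/setP => j; rewrite !inE.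
by apply/negP => /andP [/eqP h1 /eqP h2]; apply: buv; rewrite h1 h2.
Qed.
Lemma eq_ord0 n (j : 'I_n.+1) : (j == ord0) = (val j == 0%N).
Proof. by rewrite -(inj_eq val_inj). Qed.

Lemma sh_sum0 (R : realType) k eta (x : 'I_(eta * (k - 1)).+1 -> R) : (0 < k - 1)%N ->
  \sum_j (mu (hyperstar k eta) ord0 j)%:R * x j = \sum_(j | val j != 0%N) x j.
Proof.
move=> m0; rewrite [RHS]big_mkcond; apply: eq_bigr => j _.
rewrite mu_star //= eq_sym eq_ord0.
by case: (val j == 0%N) => /=; rewrite ?mul0r ?mul1r.
Qed.

Lemma sh_sumi (R : realType) k eta (x : 'I_(eta * (k - 1)).+1 -> R) (i : 'I_(eta * (k - 1)).+1) : (0 < k - 1)%N ->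
  val i != 0%N ->
  \sum_j (mu (hyperstar k eta) i j)%:R * x j =
  x ord0 + \sum_(j : 'I_(eta * (k - 1)).+1 | (val j != 0%N) && (blk k j == blk k i)) x j - x i.
Proof.
move=> m0 i0.
rewrite (bigD1 ord0) //= mu_star // eq_ord0 (negPf i0) /= mul1r.
rewrite [X in _ = _ + X - _](bigD1 i) /=; last by rewrite i0 /=.
rewrite (addrC (x i)) addrA addrK; congr (_ + _).
rewrite big_mkcond [RHS]big_mkcond; apply: eq_bigr => j _.
rewrite mu_star // (negPf i0) /= eq_ord0.
case: (val j =P 0%N) => j0 /=; first by [].
case: (j =P i) => [->|/eqP ji]; first by rewrite eqxx andbF mul0r.
rewrite eq_sym (negPf ji) andbT eq_sym.
by case: (_ == _); rewrite ?mul1r ?mul0r.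
Qed.
Lemma hprincipal_of_eig (R : realType) n k (E : {set {set 'I_n}}) (y : 'I_n -> R) rho :
  (0 < k)%N -> uniform k E -> (forall i, 0 < y i) -> \sum_i y i ^+ k = 1 ->
  (forall i, rho * y i ^+ k.-1 = \sum_(e in E | i \in e) \prod_(v in e :\ i) y v) ->
  hprincipal k E y.
Proof.
move=> k0 hu y0 s1 heig.
have [h1 h2] := hyper_gen k0 hu y0 heig.
split=> //; split=> //; exists rho; split=> //; split.
  exists y; split.
    by rewrite -s1; apply: eq_bigr => i _; rewrite ger0_norm // ltW.
  by rewrite h1 s1 mulr1.
by move=> z hz; have := h2 z; rewrite hz mulr1.
Qed.

Lemma mu_sym n (E : {set {set 'I_n}}) u v : mu E u v = mu E v u.
Proof.
rewrite /mu eq_sym; case: eqP => // _.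
have -> : [set e in E | (u \in e) && (v \in e)] = [set e in E | (v \in e) && (u \in e)].
  by apply/setP => e; rewrite !inE [(u \in e) && _]andbC.
by [].
Qed.

Lemma shadow_of_eig (R : realType) n (E : {set {set 'I_n}}) (x : 'I_n -> R) lam :
  (forall i, 0 < x i) -> \sum_i x i ^+ 2 = 1 ->
  (forall i, \sum_j (mu E i j)%:R * x j = lam * x i) ->
  shadow_principal E x.
Proof.
move=> x0 s1 heig.
have [h1 h2] := @shadow_gen R n (fun u v => (mu E u v)%:R) x lam
   (fun u v => f_equal (fun m : nat => (m%:R : R)) (mu_sym E u v)) (fun u v => ler0n _ _) x0 heig.
split=> //; split=> //; exists lam; split=> //; split.
  by exists x; split => //; rewrite h1 s1 mulr1.
by move=> z hz; have := h2 z; rewrite hz mulr1.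
Qed.

Lemma prod_cst (R : realType) n (S : {set 'I_n.+1}) (a b : R) :
  \prod_(v in S) (if val v == 0%N then a else b) =
  (if ord0 \in S then a else 1) * b ^+ #|S :\ ord0|.
Proof.
rewrite -prodr_const; case: ifP => h.
  rewrite (bigD1 ord0 h) /=; congr (_ * _); apply: eq_big => v.
    by rewrite !inE andbC.
  by rewrite eq_ord0 => /andP [_ /negPf ->].
rewrite mul1r; apply: eq_big => v.
  rewrite !inE; case: (boolP (v \in S)) => vS; rewrite ?andbT ?andbF //.
  by apply/esym/negP => /eqP vo; rewrite -vo vS in h.
by move=> vS; rewrite -eq_ord0; case: eqP => // vo; rewrite -vo vS in h.
Qed.
Lemma setD1D1 n (S : {set 'I_n}) x : (S :\ x) :\ x = S :\ x.
Proof. by apply/setP => v; rewrite !inE andbA andbb. Qed.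

Lemma card_D1 n (S : {set 'I_n}) x : x \in S -> #|S :\ x| = (#|S| - 1)%N.
Proof. by move=> xS; rewrite (cardsD1 x S) xS add1n subn1. Qed.

Lemma star_eig (R : realType) k eta (a b : R) : (3 <= k)%N -> 0 < a -> 0 < b ->
  a ^+ k = eta%:R * b ^+ k ->
  forall i : 'I_(eta * (k - 1)).+1,
  a / b * (if val i == 0%N then a else b) ^+ k.-1 =
  \sum_(e in hyperstar k eta | i \in e)
     \prod_(v in e :\ i) (if val v == 0%N then a else b).
Proof.
move=> k3 a0 b0 hab i.
have m0 : (0 < k - 1)%N by lia.
have p1 (c : R) : c ^+ k = c * c ^+ k.-1 by rewrite -exprS prednK //; lia.
have p2 (c : R) : c ^+ k.-1 = c * c ^+ (k - 2) by rewrite -exprS; congr (_ ^+ _); lia.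
have cS (j : 'I_eta) : #|star_edge k eta j| = k by apply: star_card m0 (ltn_ord j).
have s0 j : (ord0 : 'I_(eta * (k - 1)).+1) \in star_edge k eta j by rewrite inE.
case: (val i =P 0%N) => i0.
  have -> : i = ord0 by apply: val_inj.
  have -> : \sum_(e in hyperstar k eta | ord0 \in e)
     \prod_(v in e :\ ord0) (if val v == 0%N then a else b) =
     \sum_(e in hyperstar k eta) \prod_(v in e :\ ord0) (if val v == 0%N then a else b).
    by apply: eq_bigl => e; apply: andb_idr => /star0.
  rewrite sum_star //.
  under eq_bigr => j _ do rewrite prod_cst setD1D1 !inE eqxx /= mul1r
     (card_D1 (s0 _)) cS.
  rewrite sumr_const card_ord subn1 -mulr_natl mulrAC -p1 hab p1.
  by field; rewrite gt_eqF.
have i0' : val i != 0%N by apply/eqP.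
pose J : 'I_eta := Ordinal (blk_lt m0 i0').
have iJ : i \in star_edge k eta J by rewrite mem_star // eqxx orbT.
rewrite big_mkcondr sum_star // [RHS](bigD1 J) //= [X in _ + X]big1 ?addr0; last first.
  move=> j /negPf jJ; rewrite mem_star // (negPf i0') /=.
  have -> : (blk k i == j) = false by rewrite -jJ -(inj_eq val_inj) /= eq_sym.
  by [].
rewrite iJ prod_cst !inE eqxx /= andbT.
have -> : (0%N != i) = true by rewrite eq_sym i0'.
rewrite (card_D1 (x := ord0)); last by rewrite !inE eqxx andbT eq_sym i0'.
rewrite (card_D1 iJ) cS.
have -> : (k - 1 - 1 = k - 2)%N by lia.
by rewrite p2; field; rewrite gt_eqF.
Qed.
Lemma root_k (R : realType) (k : nat) (c : R) : (0 < k)%N -> 0 <= c ->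
  (c `^ (k%:R^-1)) ^+ k = c.
Proof.
move=> k0 c0; rewrite -powR_mulrn ?powR_ge0 // -powRrM mulVf ?powRr1 //.
by rewrite pnatr_eq0 -lt0n.
Qed.

Lemma star_hprincipal (R : realType) k eta : (3 <= k)%N -> (0 < eta)%N ->
  exists y : 'I_(eta * (k - 1)).+1 -> R, hprincipal k (hyperstar k eta) y.
Proof.
move=> k3 eta0.
have k0 : (0 < k)%N by lia.
have m0 : (0 < k - 1)%N by lia.
have kR : (k%:R : R) != 0 by rewrite pnatr_eq0 -lt0n.
have eR : (eta%:R : R) != 0 by rewrite pnatr_eq0 -lt0n.
pose a : R := (k%:R^-1) `^ (k%:R^-1).
pose b : R := ((k * eta)%:R^-1) `^ (k%:R^-1).
have ak : a ^+ k = k%:R^-1 by rewrite root_k // invr_ge0 ler0n.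
have bk : b ^+ k = (k * eta)%:R^-1 by rewrite root_k // invr_ge0 ler0n.
have a0 : 0 < a by rewrite powR_gt0 // invr_gt0 ltr0n.
have b0 : 0 < b by rewrite powR_gt0 // invr_gt0 ltr0n muln_gt0 k0.
exists (fun v => if val v == 0%N then a else b).
apply: (@hprincipal_of_eig _ _ _ _ _ (a / b)) => //.
- exact: uniform_star.
- by move=> i; case: ifP.
- rewrite big_ord_recl /= ak.
  under eq_bigr => i _ do rewrite /= bk.
  rewrite sumr_const card_ord -[X in _ + X]mulr_natl !natrM natrB //.
  by field; rewrite kR eR.
- apply: star_eig => //.
  by rewrite ak bk natrM; field; rewrite kR eR.
Qed.

Lemma star_y0 (R : realType) k eta (y : 'I_(eta * (k - 1)).+1 -> R) : (3 <= k)%N -> (0 < eta)%N ->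
  hprincipal k (hyperstar k eta) y -> y ord0 ^+ k = k%:R^-1.
Proof.
move=> k3 eta0 [y0 [s1 [rho [_ heig]]]].
have k0 : (0 < k)%N by lia.
have m0 : (0 < k - 1)%N by lia.
have kR : (k%:R : R) != 0 by rewrite pnatr_eq0 -lt0n.
have [h1 _] := hyper_gen k0 (uniform_star (eta := eta) m0) y0 heig.
rewrite s1 mulr1 in h1.
have h2 : rho * y ord0 ^+ k = lagr (hyperstar k eta) y.
  have -> : y ord0 ^+ k = y ord0 * y ord0 ^+ k.-1 by rewrite -exprS prednK.
  rewrite mulrCA heig.
  have -> : \sum_(e in hyperstar k eta | ord0 \in e) \prod_(v in e :\ ord0) y v =
     \sum_(e in hyperstar k eta) \prod_(v in e :\ ord0) y v.
    by apply: eq_bigl => e; apply: andb_idr => /star0.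
  rewrite mulr_sumr /lagr; apply: eq_bigr => e eE.
  by rewrite prod_split // star0.
have L0 : 0 < lagr (hyperstar k eta) y.
  rewrite /lagr sum_star // (bigD1 (Ordinal eta0)) //=.
  have P0 : 0 < \prod_(v in star_edge k eta 0) y v by apply: prodr_gt0.
  have S0 : 0 <= \sum_(i < eta | i != Ordinal eta0) \prod_(v in star_edge k eta i) y v.
    by apply: sumr_ge0 => i _; apply: prodr_ge0 => v _; apply: ltW.
  lra.
have r0 : rho != 0.
  apply/eqP => r0; move: h1; rewrite r0 => /eqP; rewrite mulf_eq0 (negPf kR) /=.
  by rewrite gt_eqF.
apply: (mulfI r0); by rewrite h2 -h1 mulrAC divff // mul1r.
Qed.
Lemma sum_nz (R : realType) N (F : 'I_N.+1 -> R) c :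
  (forall j : 'I_N.+1, val j != 0%N -> F j = c) ->
  \sum_(j | val j != 0%N) F j = N%:R * c.
Proof.
move=> hF; rewrite big_mkcond big_ord_recl /= add0r.
rewrite (eq_bigr (fun _ => c)) ?sumr_const ?card_ord ?mulr_natl // => i _.
by rewrite /= hF.
Qed.

Lemma sum_split0 (R : realType) N (F : 'I_N.+1 -> R) :
  \sum_j F j = F ord0 + \sum_(j | val j != 0%N) F j.
Proof.
rewrite (bigD1 ord0) //=.
Qed.

Lemma blk_sum_const (R : realType) k eta J (c : R) : (0 < k - 1)%N -> (J < eta)%N ->
  \sum_(j : 'I_(eta * (k - 1)).+1 | (val j != 0%N) && (blk k j == J)) c = (k - 1)%:R * c.
Proof.
move=> m0 Jlt.
transitivity (c *+ #|[set v : 'I_(eta * (k - 1)).+1 | (val v != 0%N) && (blk k v == J)]|).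
  by rewrite sumr_const cardsE; congr (_ *+ _); apply: eq_card => v.
by rewrite (card_blk m0 Jlt) mulr_natl.
Qed.

Lemma shadow_block (R : realType) k eta (x : 'I_(eta * (k - 1)).+1 -> R) lam :
  (3 <= k)%N -> (forall i, 0 < x i) ->
  (forall i, \sum_j (mu (hyperstar k eta) i j)%:R * x j = lam * x i) ->
  forall i : 'I_(eta * (k - 1)).+1, val i != 0%N ->
  x i * (lam - k%:R + 2) = x ord0.
Proof.
move=> k3 x0 heig i i0.
have m0 : (0 < k - 1)%N by lia.
set J := blk k i.
have Jlt : (J < eta)%N by apply: blk_lt.
set S := \sum_(j : 'I_(eta * (k - 1)).+1 | (val j != 0%N) && (blk k j == J)) x j.
have A (v : 'I_(eta * (k - 1)).+1) : val v != 0%N -> blk k v = J -> lam * x v = x ord0 + S - x v.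
  by move=> v0 bv; rewrite -heig sh_sumi // bv.
have B : lam * S = (k%:R - 1) * x ord0 + (k%:R - 2) * S.
  rewrite /S mulr_sumr.
  rewrite (eq_bigr (fun v => x ord0 + S - x v)); last first.
    by move=> v /andP [v0 /eqP bv]; rewrite A.
  rewrite big_split /= sumrN big_split /= !blk_sum_const // -/S natrB; last by lia.
  ring.
have SX : x i <= S.
  rewrite /S (bigD1 i) /=; last by rewrite i0 eqxx.
  rewrite lerDl; apply: sumr_ge0 => j _; exact: ltW.
have lam0 : 0 < lam.
  have := A i i0 erefl.
  have := x0 ord0; have := x0 i => xi0 xo0 Ai.
  have : 0 < lam * x i by rewrite Ai; lra.
  by rewrite pmulr_lgt0.
have T : (lam + 1) * (x i * (lam - k%:R + 2) - x ord0) =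
  (lam - k%:R + 2) * ((lam + 1) * x i - x ord0 - S) +
  (lam * S - (k%:R - 1) * x ord0 - (k%:R - 2) * S) by ring.
have A' : (lam + 1) * x i - x ord0 - S = 0.
  have := A i i0 erefl; lra.
have T0 : (lam + 1) * (x i * (lam - k%:R + 2) - x ord0) = 0 by rewrite T A' B; ring.
apply/eqP; rewrite -subr_eq0; apply/eqP.
move/eqP: T0; rewrite mulf_eq0 => /orP [|/eqP //].
by rewrite gt_eqF // ltr_wpDl // ltW.
Qed.
Lemma shadow_info (R : realType) k eta (x : 'I_(eta * (k - 1)).+1 -> R) :
  (3 <= k)%N -> (0 < eta)%N -> shadow_principal (hyperstar k eta) x ->
  exists lam : R, [/\ 0 < lam, eta%:R <= lam ^+ 2, 0 <= 2^-1 - x ord0 ^+ 2 &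
                   2^-1 - x ord0 ^+ 2 <= (k%:R - 2) / (2 * lam)].
Proof.
move=> k3 eta0 [x0 [s1 [lam [_ heig]]]].
have m0 : (0 < k - 1)%N by lia.
have hb := shadow_block k3 x0 heig.
set d := lam - k%:R + 2 in hb.
have [v1 [v10 _]] := vert_of_blk m0 eta0.
have d0 : 0 < d.
  have := x0 ord0; rewrite -(hb v1 v10) pmulr_rgt0 //.
have xi (i : 'I_(eta * (k - 1)).+1) : val i != 0%N -> x i = x ord0 / d.
  by move=> i0; rewrite -(hb i i0); field; rewrite gt_eqF.
set Nr : R := (eta * (k - 1))%:R.
have NrE : Nr = eta%:R * (k%:R - 1) by rewrite /Nr natrM natrB //; lia.
have C : lam * x ord0 = Nr * (x ord0 / d).
  by rewrite -heig sh_sum0 // (sum_nz (c := x ord0 / d)).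
have U : 1 = x ord0 ^+ 2 + Nr * (x ord0 / d) ^+ 2.
  by rewrite -s1 sum_split0 (sum_nz (c := (x ord0 / d) ^+ 2)) // => j j0; rewrite xi.
have x00 := x0 ord0.
have LD : lam * d = Nr.
  have : (lam * d - Nr) * (x ord0 / d) = 0.
    by rewrite mulrBl -C; field; rewrite gt_eqF.
  move/eqP; rewrite mulf_eq0 => /orP [/eqP h|]; first by apply/eqP; rewrite -subr_eq0 h.
  by rewrite gt_eqF // divr_gt0.
set X := x ord0 ^+ 2 in U *.
have U' : d ^+ 2 = X * d ^+ 2 + X * Nr.
  rewrite -[d ^+ 2 in LHS]mulr1 [in LHS]U /X.
  by field; rewrite gt_eqF.
have XD : X * (d + lam) = d.
  have : d * (X * (d + lam) - d) = 0.
    have -> : d * (X * (d + lam) - d) = X * d ^+ 2 + X * (lam * d) - d ^+ 2 by ring.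
    by rewrite LD -U' subrr.
  by move/eqP; rewrite mulf_eq0 (gt_eqF d0) /= subr_eq0 => /eqP.
have k3R : (3 : R) <= k%:R by rewrite (ler_nat R 3 k).
have lam0 : 0 < lam by rewrite /d in d0; lra.
have H : 2^-1 - X = (k%:R - 2) / (2 * (d + lam)).
  have dl : 0 < d + lam by lra.
  have XE : X = d / (d + lam) by rewrite -[X]mulr1 -(divff (lt0r_neq0 dl)) mulrA XD.
  rewrite XE /d; field; rewrite /d in dl; by rewrite gt_eqF.
exists lam; split => //.
- have e1 : (1 : R) <= eta%:R by rewrite (ler_nat R 1 eta).
  rewrite NrE /d in LD; nra.
- by rewrite H divr_ge0 //; lra.
rewrite H; apply: ler_wpM2l; first by lra.
rewrite lef_pV2 ?posrE; lra.
Qed.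
Lemma star_shadow (R : realType) k eta : (3 <= k)%N -> (0 < eta)%N ->
  exists x : 'I_(eta * (k - 1)).+1 -> R, shadow_principal (hyperstar k eta) x.
Proof.
move=> k3 eta0.
have m0 : (0 < k - 1)%N by lia.
set K : R := k%:R.
have k3R : (3 : R) <= K by rewrite (ler_nat R 3 k).
set Nr : R := (eta * (k - 1))%:R.
have Nr0 : 0 < Nr by rewrite ltr0n muln_gt0 eta0.
set s := Num.sqrt ((K - 2) ^+ 2 + 4 * Nr).
have s0 : 0 <= s by apply: sqrtr_ge0.
have s2 : s ^+ 2 = (K - 2) ^+ 2 + 4 * Nr by rewrite sqr_sqrtr //; nra.
have sK : K - 2 < s by nra.
set lam := ((K - 2) + s) / 2.
set d := (s - (K - 2)) / 2.
have d0 : 0 < d by rewrite /d; lra.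
have LD : lam * d = Nr by rewrite /lam /d; nra.
have ld : lam = d + (K - 2) by rewrite /lam /d; field.
set q := Num.sqrt (d ^+ 2 + Nr).
have q0 : 0 < q by rewrite sqrtr_gt0; nra.
have q2 : q ^+ 2 = d ^+ 2 + Nr by rewrite sqr_sqrtr //; nra.
exists (fun v => if val v == 0%N then d / q else q^-1).
apply: (@shadow_of_eig _ _ _ _ lam).
- by move=> i; case: ifP => _; [apply: divr_gt0 | rewrite invr_gt0].
- rewrite (@sum_split0 _ _ (fun i => (if val i == 0%N then d / q else q^-1) ^+ 2)) /=.
  rewrite (sum_nz (c := q^-2)); last by move=> j /negPf -> /=; rewrite exprVn.
  rewrite -/Nr.
  have -> : (d / q) ^+ 2 + Nr * q ^-2 = (d ^+ 2 + Nr) / q ^+ 2 by field; rewrite gt_eqF.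
  by rewrite -q2 divff // gt_eqF // exprn_gt0.
move=> i; case: (val i =P 0%N) => i0.
  have -> : i = ord0 by apply: val_inj.
  rewrite sh_sum0 // (sum_nz (c := q^-1)); last by move=> j /negPf ->.
  by rewrite /= -/Nr -LD -mulrA.
have i0' : val i != 0%N by apply/eqP.
rewrite sh_sumi //=.
rewrite (eq_bigr (fun _ => q^-1)); last by move=> j /andP [/negPf -> _].
rewrite blk_sum_const //; last exact: blk_lt.
rewrite natrB; last by lia.
rewrite -/K (negPf i0') ld; field; exact: lt0r_neq0.
Qed.
Lemma star_conn k eta : (0 < k - 1)%N -> (0 < eta)%N -> hconnected (hyperstar k eta).
Proof.
move=> m0 eta0 u v.
have h (w : 'I_(eta * (k - 1)).+1) : [exists e in hyperstar k eta, (w \in e) && (ord0 \in e)].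
  have [j wj] : exists j : 'I_eta, w \in star_edge k eta j.
    case: (boolP (val w == 0%N)) => w0.
      by exists (Ordinal eta0); rewrite mem_star // w0.
    by exists (Ordinal (blk_lt m0 w0)); rewrite mem_star // eqxx orbT.
  apply/existsP; exists (star_edge k eta j).
  by rewrite wj inE /= andbT; apply/imsetP; exists j.
apply: (connect_trans (y := ord0)); apply: connect1 => /=; first exact: h.
have := h v; move/existsP => [e /andP [eE /andP [ve oe]]].
by apply/existsP; exists e; rewrite eE ve oe.
Qed.

Lemma shadow_close (R : realType) k (e : R) : (3 <= k)%N -> 0 < e ->
  exists N : nat, forall n, (N <= n)%N -> (0 < n)%N /\
    forall x : 'I_(n * (k - 1)).+1 -> R, shadow_principal (hyperstar k n) x ->
      0 <= 2^-1 - x ord0 ^+ 2 /\ 2^-1 - x ord0 ^+ 2 <= e.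
Proof.
move=> k3 e0.
have k3R : (3 : R) <= k%:R by rewrite (ler_nat R 3 k).
set t := (k%:R - 2) / (2 * e).
have t0 : 0 <= t by rewrite /t divr_ge0 //; lra.
exists (Num.trunc (t ^+ 2)).+1 => n hn; split; first by apply: leq_trans hn.
move=> x hx.
have [lam [lam0 nl h1 h2]] := shadow_info k3 (leq_trans (ltn0Sn _) hn) hx.
split => //; apply: le_trans h2 _.
have tn : t ^+ 2 < n%:R.
  apply: lt_le_trans (truncnS_gt _) _; by rewrite ler_nat.
have tl : t <= lam by nra.
rewrite /t ler_pdivrMr in tl; last by lra.
by rewrite ler_pdivrMr; [lra | lra].
Qed.
Unset Implicit Arguments.
Local Open Scope classical_set_scope.

Theorem mainTheorem7 (R : realType) (k : nat) (hk : (3 <= k)%N) :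
  (forall eta : nat, (0 < eta)%N ->
     (exists y : 'I_(eta * (k - 1)).+1 -> R, hprincipal k (hyperstar k eta) y) /\
     (forall y : 'I_(eta * (k - 1)).+1 -> R,
        hprincipal k (hyperstar k eta) y -> y ord0 ^+ k = k%:R^-1)) /\
  (forall eta : nat, (0 < eta)%N ->
     exists x : 'I_(eta * (k - 1)).+1 -> R, shadow_principal (hyperstar k eta) x) /\
  (forall x : forall eta : nat, 'I_(eta * (k - 1)).+1 -> R,
     (forall eta : nat, (0 < eta)%N -> shadow_principal (hyperstar k eta) (x eta)) ->
     (fun eta : nat => x eta ord0 ^+ 2) @ \oo --> (2%:R^-1 : R)) /\
  ((2%:R^-1 - k%:R^-1 : R)%:E <= Delta R k)%E.
Proof.
have m0 : (0 < k - 1)%N by lia.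
split.
  move=> eta eta0; split; first exact: star_hprincipal.
  by move=> y hy; apply: star_y0 hy.
split; first by move=> eta eta0; apply: star_shadow.
split.
  move=> x hx; apply/cvgrPdist_le => e e0.
  have [N hN] := shadow_close hk e0.
  exists N => // n /= hn.
  have [n0 hc] := hN n hn.
  have [c1 c2] := hc (x n) (hx n n0).
  by rewrite ger0_norm.
rewrite /Delta; apply/lee_subgt0Pr => e e0.
have [N hN] := shadow_close hk e0.
have [n0 hc] := hN N (leqnn N).
have [y hy] := star_hprincipal R hk n0.
have [x hx] := star_shadow R hk n0.
have [c1 c2] := hc x hx.
apply: (@le_trans _ _ (`|y ord0 ^+ k - x ord0 ^+ 2|)%:E).
  rewrite -EFinB lee_fin (star_y0 hk n0 hy) ler_normr; apply/orP; right.
  lra.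
apply: ereal_sup_ubound.
exists (N * (k - 1)).+1, (hyperstar k N), y, x, ord0; split => //.
- exact: uniform_star.
- exact: star_conn.
Qed.
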